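(* For every complex $s$ with $\Re(s)>3$, \[\sum_{k=1}^\infty (-1)^{k-1}k^2\,\zeta(s,k)=\tfrac{1}{2}\Big\{(1-2^{2-s}) \zeta(s-1)+(1-2^{3-s}) \zeta(s-2)\Big\}.\]
   Context: $\zeta(s,\alpha)=\sum_{n=0}^\infty (n+\alpha)^{-s}$ denotes the Hurwitz zeta function ($\Re(s)>1$, $\alpha>0$), and $\zeta(s)=\zeta(s,1)$ is the Riemann zeta function. *)

(* Defs.v *)
From Stdlib Require Import Reals.
From Coquelicot Require Import Coquelicot.
Open Scope C_scope.

(* Complex power x^s for real x > 0 and complex s: exp(s * ln x),
   written out as exp(Re s ln x) (cos(Im s ln x) + i sin(Im s ln x)). *)
Definition cpow (x : R) (s : C) : C :=
  (exp (Re s * ln x) * cos (Im s * ln x), exp (Re s * ln x) * sin (Im s * ln x))%R.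

(* Sum of a complex series (value meaningful when the series converges). *)
Definition Cseries (f : nat -> C) : C :=
  (Series (fun n => Re (f n)), Series (fun n => Im (f n))).

Definition hurwitz_zeta (s : C) (a : R) : C :=
  Cseries (fun n => cpow (INR n + a) (- s)).

Definition riemann_zeta (s : C) : C := hurwitz_zeta s 1.

(* Main.v *)
Require Import Defs.
From Stdlib Require Import Reals Lra Lia.
From Coquelicot Require Import Coquelicot.
Open Scope C_scope.

Lemma cpow_plus (x : R) (u v : C) : cpow x (u + v) = cpow x u * cpow x v.
Proof.
  unfold cpow. destruct u as [u1 u2]; destruct v as [v1 v2]. simpl.
  rewrite !Rmult_plus_distr_r, exp_plus, cos_plus, sin_plus.
  apply injective_projections; simpl; ring.
Qed.

Lemma cpow_mult (x y : R) (s : C) : (0 < x)%R -> (0 < y)%R ->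
  cpow (x * y) s = cpow x s * cpow y s.
Proof.
  intros hx hy. unfold cpow. destruct s as [a b]. simpl.
  rewrite ln_mult by auto.
  rewrite !Rmult_plus_distr_l, exp_plus, cos_plus, sin_plus.
  apply injective_projections; simpl; ring.
Qed.

Lemma cpow_1 (x : R) : (0 < x)%R -> cpow x 1 = RtoC x.
Proof.
  intros hx. unfold cpow. simpl. rewrite Rmult_0_l, cos_0, sin_0, Rmult_1_l, exp_ln by auto.
  apply injective_projections; simpl; ring.
Qed.

Lemma Cmod_cpow (x : R) (s : C) : Cmod (cpow x s) = exp (Re s * ln x).
Proof.
  unfold cpow, Cmod. simpl.
  pose proof (sin2_cos2 (Im s * ln x)) as H. unfold Rsqr in H.
  replace ((exp (Re s * ln x) * cos (Im s * ln x)) * ((exp (Re s * ln x) * cos (Im s * ln x)) * 1) + (exp (Re s * ln x) * sin (Im s * ln x)) * ((exp (Re s * ln x) * sin (Im s * ln x)) *1))%R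
   with ((exp (Re s * ln x)) * (exp (Re s * ln x)) * (sin (Im s * ln x) * sin (Im s * ln x) + cos (Im s * ln x) * cos (Im s * ln x)))%R by ring.
  rewrite H, Rmult_1_r. apply sqrt_square. left; apply exp_pos.
Qed.
Open Scope R_scope.

Definition ft (sg x : R) : R := exp (- sg * ln x).
Definition gt (sg x : R) : R := exp ((1 - sg) * ln x) / (sg - 1).

Lemma ln_sub_le (x : R) : 1 < x -> ln (x - 1) <= ln x - / x.
Proof.
  intros hx.
  assert (h1 : x - 1 = x * (1 - / x)) by (field; lra).
  assert (hpos : 0 < 1 - / x).
  { assert (/ x < 1). { rewrite <- Rinv_1. apply Rinv_lt_contravar; lra. } lra. }
  rewrite h1, ln_mult by lra.
  assert (ln (1 - / x) <= - / x).
  { rewrite <- (ln_exp (- / x)). apply ln_le; auto.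
    assert (- / x <> 0). { assert (0 < / x) by (apply Rinv_0_lt_compat; lra). lra. }
    pose proof (exp_ineq1 _ H). lra. }
  lra.
Qed.

Lemma exp_mono (a b : R) : a <= b -> exp a <= exp b.
Proof. intros [h|h]; [left; apply exp_increasing; auto | rewrite h; lra]. Qed.

Lemma tele (sg x : R) : 1 < sg -> 1 < x -> ft sg x <= gt sg (x - 1) - gt sg x.
Proof.
  intros hs hx. unfold ft, gt.
  set (E := exp (- sg * ln x)).
  assert (hE : exp ((1 - sg) * ln x) = E * x).
  { unfold E. replace ((1 - sg) * ln x) with (- sg * ln x + ln x) by ring.
    rewrite exp_plus, exp_ln by lra. reflexivity. }
  assert (hEp : 0 < E) by apply exp_pos.
  pose proof (ln_sub_le x hx) as hl.
  assert (h2 : (1 - sg) * ln x + (sg - 1) / x <= (1 - sg) * ln (x - 1)).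
  { unfold Rdiv. replace ((1 - sg) * ln x + (sg - 1) * / x) with ((1 - sg) * (ln x - / x)) by ring.
    apply Rmult_le_compat_neg_l; lra. }
  assert (h3 : exp ((1 - sg) * ln x) * (1 + (sg - 1) / x) <= exp ((1 - sg) * ln (x - 1))).
  { eapply Rle_trans; [| apply exp_mono; exact h2].
    rewrite exp_plus. apply Rmult_le_compat_l; [left; apply exp_pos | apply exp_ineq1_le]. }
  rewrite hE in h3.
  replace (E * x * (1 + (sg - 1) / x)) with (E * x + E * (sg - 1)) in h3 by (field; lra).
  apply (Rmult_le_reg_r (sg - 1)); [lra|].
  replace ((exp ((1 - sg) * ln (x - 1)) / (sg - 1) - exp ((1 - sg) * ln x) / (sg - 1)) * (sg - 1))
    with (exp ((1 - sg) * ln (x - 1)) - exp ((1 - sg) * ln x)) by (field; lra).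
  rewrite hE. lra.
Qed.

Lemma gt_nonneg (sg x : R) : 1 < sg -> 0 <= gt sg x.
Proof. intros h. unfold gt. apply Rdiv_le_0_compat; [left; apply exp_pos | lra]. Qed.

Lemma ft_pos (sg x : R) : 0 < ft sg x.
Proof. apply exp_pos. Qed.

Lemma psum_bound_aux (sg a : R) (N : nat) : 1 < sg -> 0 < a ->
  sum_n (fun n => ft sg (INR n + a)) N + gt sg (INR N + a) <= ft sg a + gt sg a.
Proof.
  intros hs ha. induction N as [|N IH].
  - rewrite sum_O. simpl. rewrite Rplus_0_l. lra.
  - rewrite sum_Sn. change plus with Rplus.
    pose proof (tele sg (INR (S N) + a) hs) as T.
    rewrite S_INR in *.
    replace (INR N + 1 + a - 1) with (INR N + a) in T by ring.
    assert (1 < INR N + 1 + a) by (pose proof (pos_INR N); lra).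
    specialize (T H). lra.
Qed.

Lemma psum_bound (sg a : R) (N : nat) : 1 < sg -> 0 < a ->
  sum_n (fun n => ft sg (INR n + a)) N <= ft sg a + gt sg a.
Proof.
  intros hs ha. pose proof (psum_bound_aux sg a N hs ha). pose proof (gt_nonneg sg (INR N + a) hs). lra.
Qed.

Lemma ex_series_ft (sg a : R) : 1 < sg -> 0 < a -> ex_series (fun n => ft sg (INR n + a)).
Proof.
  intros hs ha.
  assert (H : ex_finite_lim_seq (sum_n (fun n => ft sg (INR n + a)))).
  { apply (ex_finite_lim_seq_incr _ (ft sg a + gt sg a)).
    - intros n. rewrite sum_Sn. change plus with Rplus. pose proof (ft_pos sg (INR (S n) + a)). lra.
    - intros n. apply psum_bound; auto. }
  destruct H as [l Hl]. exists l. exact Hl.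
Qed.
Open Scope C_scope.

Lemma sum_n_Re (f : nat -> C) (N : nat) : Re (sum_n f N) = sum_n (fun n => Re (f n)) N.
Proof.
  induction N as [|N IH].
  - rewrite !sum_O. reflexivity.
  - rewrite !sum_Sn. rewrite <- IH. reflexivity.
Qed.

Lemma sum_n_Im (f : nat -> C) (N : nat) : Im (sum_n f N) = sum_n (fun n => Im (f n)) N.
Proof.
  induction N as [|N IH].
  - rewrite !sum_O. reflexivity.
  - rewrite !sum_Sn. rewrite <- IH. reflexivity.
Qed.

Lemma Cseries_correct (f : nat -> C) (l : C) :
  is_series (V := C_NormedModule) f l -> Cseries f = l.
Proof.
  intros H. unfold is_series in H. pose proof (proj1 (@filterlim_locally nat C_UniformSpace eventually _ (sum_n f) l) H) as H0; clear H; rename H0 into H.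
  unfold Cseries. destruct l as [l1 l2].
  apply injective_projections; simpl; apply is_series_unique; unfold is_series;
    apply (proj2 (filterlim_locally _ _)); intros eps; specialize (H eps);
    revert H; apply filter_imp; intros N [h1 h2].
  - rewrite <- sum_n_Re. exact h1.
  - rewrite <- sum_n_Im. exact h2.
Qed.

Lemma Cmod_sum_n (f : nat -> C) (N : nat) :
  (Cmod (sum_n f N) <= sum_n (fun n => Cmod (f n)) N)%R.
Proof.
  induction N as [|N IH].
  - rewrite !sum_O. lra.
  - rewrite !sum_Sn. change (@plus R_AbelianMonoid) with Rplus.
    eapply Rle_trans; [apply Cmod_triangle|]. lra.
Qed.

Lemma Cmod_cpow_neg (x : R) (s : C) : Cmod (cpow x (- s)) = ft (Re s) x.
Proof. rewrite Cmod_cpow. unfold ft. f_equal; simpl; try ring. Qed.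

Lemma hz_series (s : C) (a : R) : (1 < Re s)%R -> (0 < a)%R ->
  is_series (V := C_NormedModule) (fun n => cpow (INR n + a) (- s)) (hurwitz_zeta s a).
Proof.
  intros hs ha.
  assert (E : ex_series (V := C_CompleteNormedModule) (fun n => cpow (INR n + a) (- s))).
  { apply (ex_series_le _ (fun n => ft (Re s) (INR n + a))).
    - intros n. change norm with Cmod. rewrite Cmod_cpow_neg. lra.
    - apply ex_series_ft; auto. }
  destruct E as [l Hl]. unfold hurwitz_zeta. rewrite (Cseries_correct _ l Hl). exact Hl.
Qed.

Lemma hz_bound (s : C) (a : R) : (1 < Re s)%R -> (0 < a)%R ->
  (Cmod (hurwitz_zeta s a) <= ft (Re s) a + gt (Re s) a)%R.
Proof.
  intros hs ha. pose proof (hz_series s a hs ha) as H.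
  assert (H2 : is_lim_seq (fun N => Cmod (sum_n (fun n => cpow (INR n + a) (- s)) N)) (Cmod (hurwitz_zeta s a))).
  { unfold is_lim_seq. change (Rbar_locally (Finite (Cmod (hurwitz_zeta s a)))) with (locally (Cmod (hurwitz_zeta s a))).

    exact (filterlim_comp _ _ _ _ _ _ _ _ H (@filterlim_norm C_AbsRing C_NormedModule _)). }
  assert (H3 : Rbar_le (Cmod (hurwitz_zeta s a)) (ft (Re s) a + gt (Re s) a)%R).
  { eapply is_lim_seq_le; [| exact H2 | apply is_lim_seq_const].
    intros N. simpl. eapply Rle_trans; [apply Cmod_sum_n|].
    eapply Rle_trans; [| apply (psum_bound (Re s) a N hs ha)].
    right. apply sum_n_ext. intros n. apply Cmod_cpow_neg. }
  exact H3.
Qed.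

Lemma hz_shift (s : C) (x : R) : (1 < Re s)%R -> (0 < x)%R ->
  hurwitz_zeta s x = cpow x (- s) + hurwitz_zeta s (x + 1).
Proof.
  intros hs hx. pose proof (hz_series s x hs hx) as H.
  set (l := hurwitz_zeta s x) in *.
  assert (H1 : is_series (V := C_NormedModule) (fun k => cpow (INR (S k) + x) (- s)) (l - cpow x (- s))).
  { assert (E : l = plus (l - cpow x (- s)) (cpow (INR 0 + x) (- s))).
    { change plus with Cplus. simpl INR. rewrite Rplus_0_l. ring. }
    rewrite E in H. exact (is_series_incr_1 _ _ H). }
  assert (H2 : is_series (V := C_NormedModule) (fun k => cpow (INR k + (x + 1)) (- s)) (l - cpow x (- s))).
  { revert H1. apply is_series_ext. intros n. rewrite S_INR. f_equal. ring. }
  unfold hurwitz_zeta at 1. rewrite (Cseries_correct _ _ H2). ring.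
Qed.
Open Scope R_scope.

Lemma lim_exp_ln (al : R) : al < 0 -> is_lim_seq (fun K => exp (al * ln (INR (S K)))) 0.
Proof.
  intros hal.
  assert (h1 : is_lim_seq (fun K => INR (S K)) p_infty).
  { apply (is_lim_seq_incr_1 INR p_infty). apply is_lim_seq_INR. }
  assert (h2 : is_lim_seq (fun K => ln (INR (S K))) p_infty).
  { apply (is_lim_comp_seq ln _ p_infty p_infty is_lim_ln_p); [| exact h1].
    exists O. intros n _. discriminate. }
  assert (h3 : is_lim_seq (fun K => al * ln (INR (S K))) m_infty).
  { pose proof (is_lim_seq_scal_l _ al _ h2) as H.
    replace (Rbar_mult al p_infty) with m_infty in H; [exact H|].
    simpl. destruct (Rle_dec 0 al); [exfalso; lra|]. reflexivity. }
  apply (is_lim_comp_seq exp _ m_infty 0 is_lim_exp_m); [| exact h3].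
  exists O. intros n _. discriminate.
Qed.
Open Scope C_scope.

Definition sgC (K : nat) : C := RtoC ((-1) ^ K)%R.
Definition nR (K : nat) : C := RtoC (INR K).
Definition av (t : C) (m : nat) : C := cpow (INR m) (- t).

Fixpoint Zs (t : C) (K : nat) : C :=
  match K with O => 0 | S k => Zs t k + av t (S k) end.
Fixpoint Es (t : C) (K : nat) : C :=
  match K with O => 0 | S k => Es t k + sgC k * av t (S k) end.
Fixpoint Qs (s : C) (K : nat) : C :=
  match K with O => 0 | S k => Qs s k + sgC k * nR (S k) * nR (S (S k)) / 2 * av s (S k) end.
Definition cc (K : nat) : C := - sgC K * nR K * nR (S K) / 2.

Lemma sgC_S (K : nat) : sgC (S K) = - sgC K.
Proof. unfold sgC. apply injective_projections; simpl; ring. Qed.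

Lemma nR_S (K : nat) : nR (S K) = nR K + 1.
Proof. unfold nR. rewrite S_INR. apply injective_projections; simpl; ring. Qed.

Lemma INR_S_pos (m : nat) : (0 < INR (S m))%R.
Proof. apply lt_0_INR. lia. Qed.

Lemma av_shift1 (s : C) (m : nat) : av (s - 1) (S m) = nR (S m) * av s (S m).
Proof.
  unfold av, nR. replace (- (s - 1)) with (1 + - s) by ring.
  rewrite cpow_plus, cpow_1 by apply INR_S_pos. reflexivity.
Qed.

Lemma av_shift2 (s : C) (m : nat) : av (s - 2) (S m) = nR (S m) * nR (S m) * av s (S m).
Proof.
  unfold av, nR. replace (- (s - 2)) with (1 + (1 + - s)) by ring.
  rewrite !cpow_plus, cpow_1 by apply INR_S_pos. ring.
Qed.

Lemma av_double (t : C) (m : nat) : av t (S m + S m) = cpow 2 (- t) * av t (S m).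
Proof.
  unfold av. rewrite plus_INR. replace (INR (S m) + INR (S m))%R with (2 * INR (S m))%R by ring.
  apply cpow_mult; [lra | apply INR_S_pos].
Qed.

Lemma Qs_E (s : C) (K : nat) : Qs s K = / 2 * (Es (s - 1) K + Es (s - 2) K).
Proof.
  induction K as [|K IH].
  - simpl. ring.
  - change (Qs s (S K)) with (Qs s K + sgC K * nR (S K) * nR (S (S K)) / 2 * av s (S K)).
    change (Es (s - 1) (S K)) with (Es (s - 1) K + sgC K * av (s - 1) (S K)).
    change (Es (s - 2) (S K)) with (Es (s - 2) K + sgC K * av (s - 2) (S K)).
    rewrite IH, av_shift1, av_shift2, (nR_S (S K)). field.
Qed.

Lemma Es_Z_aux (t : C) (N : nat) :
  Es t (N + N) = Zs t (N + N) - 2 * cpow 2 (- t) * Zs t N /\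
  Es t (S (N + N)) = Zs t (S (N + N)) - 2 * cpow 2 (- t) * Zs t N.
Proof.
  induction N as [|N [IH1 IH2]].
  - simpl. unfold sgC. simpl. split; ring.
  - assert (E : (S N + S N = S (S (N + N)))%nat) by lia.
    assert (hs1 : sgC (S (N + N)) = -1).
    { unfold sgC. replace (N + N)%nat with (2 * N)%nat by lia. rewrite pow_1_odd.
      apply injective_projections; simpl; ring. }
    assert (hd : av t (S (S (N + N))) = cpow 2 (- t) * av t (S N)).
    { rewrite <- E. apply av_double. }
    assert (A1 : Es t (S N + S N) = Zs t (S N + S N) - 2 * cpow 2 (- t) * Zs t (S N)).
    { rewrite E. change (Es t (S (S (N + N)))) with (Es t (S (N + N)) + sgC (S (N + N)) * av t (S (S (N + N)))).
      change (Zs t (S (S (N + N)))) with (Zs t (S (N + N)) + av t (S (S (N + N)))).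
      change (Zs t (S N)) with (Zs t N + av t (S N)).
      rewrite IH2, hs1, hd. ring. }
    split; [exact A1|].
    change (Es t (S (S N + S N))) with (Es t (S N + S N) + sgC (S N + S N) * av t (S (S N + S N))).
    change (Zs t (S (S N + S N))) with (Zs t (S N + S N) + av t (S (S N + S N))).
    rewrite A1.
    assert (hs3 : sgC (S N + S N) = 1).
    { unfold sgC. replace (S N + S N)%nat with (2 * (S N))%nat by lia. rewrite pow_1_even. reflexivity. }
    rewrite hs3. ring.
Qed.

Lemma Es_Z (t : C) (K : nat) : Es t K = Zs t K - 2 * cpow 2 (- t) * Zs t (Nat.div2 K).
Proof.
  destruct (Nat.Even_or_Odd K) as [[m Hm] | [m Hm]]; subst K.
  - rewrite Nat.div2_double. replace (2 * m)%nat with (m + m)%nat by lia. apply Es_Z_aux.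
  - replace (2 * m + 1)%nat with (S (m + m)) by lia.
    replace (Nat.div2 (S (m + m))) with m. apply Es_Z_aux.
    replace (m + m)%nat with (2 * m)%nat by lia. rewrite Nat.div2_succ_double. reflexivity.
Qed.

Lemma partial_sum (s : C) (N : nat) : (1 < Re s)%R ->
  sum_n (fun n => sgC n * (nR (S n) * nR (S n)) * hurwitz_zeta s (INR (S n))) N
  = Qs s (S N) + cc (S N) * hurwitz_zeta s (INR (S (S N))).
Proof.
  intros hs. induction N as [|N IH].
  - rewrite sum_O. match goal with |- ?a = ?b => change (@eq C a b) end. simpl Qs. unfold cc.
    rewrite (hz_shift s (INR 1) hs) by apply INR_S_pos.
    replace (INR 1 + 1)%R with (INR 2) by (simpl; ring).
    rewrite sgC_S. unfold sgC, nR, av. simpl INR. simpl pow.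
    rewrite RtoC_plus. field.
  - rewrite sum_Sn, IH. change plus with Cplus. match goal with |- ?a = ?b => change (@eq C a b) end.
    change (Qs s (S (S N))) with (Qs s (S N) + sgC (S N) * nR (S (S N)) * nR (S (S (S N))) / 2 * av s (S (S N))).
    rewrite (hz_shift s (INR (S (S N))) hs) by apply INR_S_pos.
    replace (INR (S (S N)) + 1)%R with (INR (S (S (S N)))) by (rewrite (S_INR (S (S N))); ring).
    unfold cc. rewrite !sgC_S, !nR_S. unfold av. field.
Qed.

Lemma lim_plus (u v : nat -> C) (a b : C) :
  filterlim u eventually (locally (T := C_UniformSpace) a) ->
  filterlim v eventually (locally (T := C_UniformSpace) b) ->
  filterlim (fun n => u n + v n) eventually (locally (T := C_UniformSpace) (a + b)).
Proof.
  intros Hu Hv.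
  apply (filterlim_comp_2 u v (fun x y => x + y) Hu Hv).
  exact (@filterlim_plus C_AbsRing C_NormedModule a b).
Qed.

Lemma lim_mult_l (u : nat -> C) (a c : C) :
  filterlim u eventually (locally (T := C_UniformSpace) a) ->
  filterlim (fun n => c * u n) eventually (locally (T := C_UniformSpace) (c * a)).
Proof.
  intros Hu. apply (filterlim_comp _ _ _ u (fun z => c * z) _ _ _ Hu).
  exact (@filterlim_scal_r C_AbsRing C_NormedModule c a).
Qed.

Lemma filterlim_S_ev : filterlim S eventually eventually.
Proof.
  intros P [N HN]. exists N. intros n hn. apply HN. lia.
Qed.

Lemma filterlim_div2_ev : filterlim Nat.div2 eventually eventually.
Proof.
  intros P [N HN]. exists (2 * N)%nat. intros n hn. apply HN.
  apply Nat.div2_le_lower_bound. lia.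
Qed.

Lemma lim_unshift {U : Type} (u : nat -> U) (F : (U -> Prop) -> Prop) :
  filterlim (fun n => u (S n)) eventually F -> filterlim u eventually F.
Proof.
  intros H P HP. destruct (H P HP) as [N HN]. exists (S N). intros n hn.
  destruct n as [|n]; [lia|]. apply HN. lia.
Qed.

Lemma lim_zero (u : nat -> C) (r : nat -> R) :
  (forall n, (Cmod (u n) <= r n)%R) -> is_lim_seq r 0%R ->
  filterlim u eventually (locally (T := C_UniformSpace) (RtoC 0)).
Proof.
  intros Hb Hr.
  apply (@filterlim_norm_zero nat C_AbsRing C_NormedModule eventually _).
  assert (H : is_lim_seq (fun n => Cmod (u n)) 0%R).
  { apply (is_lim_seq_le_le (fun _ => 0%R) _ r); [| apply is_lim_seq_const | exact Hr].
    intros n. split; [apply Cmod_ge_0 | apply Hb]. }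
  exact H.
Qed.

Lemma Zs_sum (t : C) (N : nat) :
  sum_n (fun n => cpow (INR n + 1) (- t)) N = Zs t (S N).
Proof.
  induction N as [|N IH].
  - rewrite sum_O. simpl Zs. unfold av. simpl INR. rewrite Rplus_0_l. symmetry. apply Cplus_0_l.
  - rewrite sum_Sn, IH. change plus with Cplus. simpl Zs. unfold av.
    rewrite <- S_INR. reflexivity.
Qed.

Lemma Zs_lim (t : C) : (1 < Re t)%R ->
  filterlim (Zs t) eventually (locally (T := C_UniformSpace) (riemann_zeta t)).
Proof.
  intros ht. apply lim_unshift.
  pose proof (hz_series t 1 ht Rlt_0_1) as H. unfold is_series in H.
  eapply filterlim_ext; [| exact H]. intros N. apply Zs_sum.
Qed.

Lemma Es_lim (t : C) : (1 < Re t)%R ->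
  filterlim (Es t) eventually
    (locally (T := C_UniformSpace) (riemann_zeta t + (- (2 * cpow 2 (- t))) * riemann_zeta t)).
Proof.
  intros ht.
  apply (filterlim_ext (fun K => Zs t K + (- (2 * cpow 2 (- t))) * Zs t (Nat.div2 K))).
  { intros K. rewrite Es_Z. ring. }
  apply lim_plus; [apply Zs_lim; auto|].
  apply lim_mult_l.
  exact (filterlim_comp _ _ _ Nat.div2 (Zs t) _ _ _ filterlim_div2_ev (Zs_lim t ht)).
Qed.

Lemma sq_exp (y a : R) : (0 < y)%R -> (y * y * exp (a * ln y) = exp ((a + 2) * ln y))%R.
Proof.
  intros hy. replace ((a + 2) * ln y)%R with (ln y + (ln y + a * ln y))%R by ring.
  rewrite !exp_plus, exp_ln by auto. ring.
Qed.

Lemma Cmod_cc (K : nat) : Cmod (cc K) = (INR K * INR (S K) / 2)%R.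
Proof.
  assert (E : cc K = RtoC (- (-1) ^ K * (INR K * INR (S K) / 2))%R).
  { unfold cc, sgC, nR. apply injective_projections; simpl; field. }
  rewrite E, Cmod_R, Rabs_mult, Rabs_Ropp, pow_1_abs, Rmult_1_l.
  apply Rabs_pos_eq. pose proof (pos_INR K). pose proof (pos_INR (S K)).
  apply Rmult_le_pos; [apply Rmult_le_pos; auto | lra].
Qed.

Lemma tail_lim (s : C) : (3 < Re s)%R ->
  filterlim (fun K => cc K * hurwitz_zeta s (INR (S K))) eventually (locally (T := C_UniformSpace) (RtoC 0)).
Proof.
  intros hs.
  set (sg := Re s).
  set (w := fun K : nat => (exp ((- sg + 2) * ln (INR (S K))) + / (sg - 1) * exp ((1 - sg + 2) * ln (INR (S K))))%R).
  apply (lim_zero _ w).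
  - intros K. rewrite Cmod_mult, Cmod_cc.
    pose proof (hz_bound s (INR (S K)) ltac:(unfold sg in *; lra) (INR_S_pos K)) as hb.
    fold sg in hb.
    assert (hy := INR_S_pos K). set (y := INR (S K)) in *.
    assert (hK : (0 <= INR K <= y)%R). { split; [apply pos_INR|]. unfold y. rewrite S_INR. lra. }
    assert (h0 : (0 <= ft sg y + gt sg y)%R).
    { pose proof (ft_pos sg y). pose proof (gt_nonneg sg y ltac:(unfold sg in *; lra)). lra. }
    apply Rle_trans with (y * y * (ft sg y + gt sg y))%R.
    + apply Rle_trans with (INR K * y / 2 * (ft sg y + gt sg y))%R.
      * apply Rmult_le_compat_l; [|exact hb]. apply Rmult_le_pos; [apply Rmult_le_pos|]; lra.
      * apply Rmult_le_compat_r; [exact h0|]. nra.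
    + right. unfold w, ft, gt. fold y. unfold Rdiv.
      rewrite Rmult_plus_distr_l, sq_exp by exact hy.
      replace (y * y * (exp ((1 - sg) * ln y) * / (sg - 1)))%R with (/ (sg - 1) * (y * y * exp ((1 - sg) * ln y)))%R by ring.
      rewrite sq_exp by exact hy. reflexivity.
  - replace 0%R with (0 + / (sg - 1) * 0)%R by ring.
    unfold w. apply is_lim_seq_plus'.
    + apply lim_exp_ln. unfold sg in *; lra.
    + apply is_lim_seq_mult'; [apply is_lim_seq_const|]. apply lim_exp_ln. unfold sg in *; lra.
Qed.

Theorem mainTheorem9 (s : C) (hs : (3 < Re s)%R) :
  is_series (V := C_NormedModule)
    (fun n : nat => RtoC ((-1) ^ n * (INR (n + 1)) ^ 2)%R * hurwitz_zeta s (INR (n + 1)))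
    ((1 / 2) * ((1 - cpow 2 (2 - s)) * riemann_zeta (s - 1)
              + (1 - cpow 2 (3 - s)) * riemann_zeta (s - 2))).
Proof.
  assert (hs1 : (1 < Re (s - 1))%R) by (unfold Re in *; simpl in *; lra).
  assert (hs2 : (1 < Re (s - 2))%R) by (unfold Re in *; simpl in *; lra).
  assert (hs0 : (1 < Re s)%R) by lra.
  apply (is_series_ext (fun n => sgC n * (nR (S n) * nR (S n)) * hurwitz_zeta s (INR (S n)))).
  { intros n. rewrite Nat.add_1_r. unfold sgC, nR. f_equal.
    apply injective_projections; simpl; ring. }
  unfold is_series.
  set (G := fun K => / 2 * (Es (s - 1) K + Es (s - 2) K) + cc K * hurwitz_zeta s (INR (S K))).
  apply (filterlim_ext (fun N => G (S N))).
  { intros N. rewrite partial_sum by exact hs0. unfold G. rewrite Qs_E. reflexivity. }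
  apply (filterlim_comp _ _ _ S G _ _ _ filterlim_S_ev).
  assert (EL : (1 / 2) * ((1 - cpow 2 (2 - s)) * riemann_zeta (s - 1)
              + (1 - cpow 2 (3 - s)) * riemann_zeta (s - 2))
    = / 2 * ((riemann_zeta (s - 1) + (- (2 * cpow 2 (- (s - 1)))) * riemann_zeta (s - 1))
           + (riemann_zeta (s - 2) + (- (2 * cpow 2 (- (s - 2)))) * riemann_zeta (s - 2))) + RtoC 0).
  { replace (2 - s) with (1 + - (s - 1)) by ring.
    replace (3 - s) with (1 + - (s - 2)) by ring.
    rewrite !cpow_plus, cpow_1 by lra. field. }
  rewrite EL. unfold G.
  apply lim_plus; [| apply tail_lim; exact hs].
  apply lim_mult_l. apply lim_plus; apply Es_lim; assumption.
Qed.
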